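(* Let $\mathcal{C}$ and $\mathcal{D}$ be linear categories over a field $k$, and let $F: \mathcal{C} \leftrightarrows \mathcal{D}: U$ be an adjunction ($F$ left adjoint to $U$) in which $F$ and $U$ are linear functors and $U$ is exact and faithful. If $\mathcal{C}$ is a finite linear category, then $\mathcal{D}$ is also a finite linear category.
   Context: Fix a field $k$. A linear category is an abelian category together with a compatible enrichment over the category of (possibly infinite-dimensional) $k$-vector spaces; a linear functor is an additive functor that is also $k$-linear on morphism spaces. A linear category is finite if (1) all morphism spaces are finite-dimensional, (2) every object has finite length (every strictly decreasing chain of subobjects is finite), (3) it has enough projectives (every object is a quotient of a projective object), and (4) it has finitely many isomorphism classes of simple objects. *)

(* Defs.v *)
From HB Require Import structures.
From mathcomp Require Import all_boot all_algebra.
Set Implicit Arguments. Unset Strict Implicit. Unset Printing Implicit Defensive.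
Import GRing.Theory.
Local Open Scope ring_scope.

Record LinCat (k : fieldType) := {
  ob :> Type;
  hom : ob -> ob -> lmodType k;
  idm : forall a, hom a a;
  comp : forall a b c, hom b c -> hom a b -> hom a c;
  comp_assoc : forall a b c d (h : hom c d) (g : hom b c) (f : hom a b),
      comp h (comp g f) = comp (comp h g) f;
  comp_id_l : forall a b (f : hom a b), comp (idm b) f = f;
  comp_id_r : forall a b (f : hom a b), comp f (idm a) = f;
  comp_linear_r : forall a b c (g : hom b c) (x : k) (f1 f2 : hom a b),
      comp g (x *: f1 + f2) = x *: comp g f1 + comp g f2;
  comp_linear_l : forall a b c (f : hom a b) (x : k) (g1 g2 : hom b c),
      comp (x *: g1 + g2) f = x *: comp g1 f + comp g2 f
}.
Arguments hom {k} C a b : rename.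
Arguments idm {k C} a : rename.
Arguments comp {k C a b c} g f : rename.

Section CatDefs.
Variables (k : fieldType) (C : LinCat k).

Definition mono (a b : C) (f : hom C a b) : Prop :=
  forall x (g h : hom C x a), comp f g = comp f h -> g = h.
Definition epi (a b : C) (f : hom C a b) : Prop :=
  forall x (g h : hom C b x), comp g f = comp h f -> g = h.
Definition iso (a b : C) (f : hom C a b) : Prop :=
  exists g : hom C b a, comp g f = idm a /\ comp f g = idm b.
Definition isomorphic (a b : C) : Prop := exists f : hom C a b, iso f.

Definition is_zero_obj (z : C) : Prop := idm z = 0.

Definition is_kernel (a b K : C) (f : hom C a b) (i : hom C K a) : Prop :=
  comp f i = 0 /\
  forall x (g : hom C x a), comp f g = 0 ->
    exists h : hom C x K, comp i h = g /\ forall h', comp i h' = g -> h' = h.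
Definition is_cokernel (a b Q : C) (f : hom C a b) (p : hom C b Q) : Prop :=
  comp p f = 0 /\
  forall x (g : hom C b x), comp g f = 0 ->
    exists h : hom C Q x, comp h p = g /\ forall h', comp h' p = g -> h' = h.
Definition is_product (a b P : C) (p1 : hom C P a) (p2 : hom C P b) : Prop :=
  forall x (f : hom C x a) (g : hom C x b),
    exists h : hom C x P, [/\ comp p1 h = f, comp p2 h = g &
       forall h', comp p1 h' = f -> comp p2 h' = g -> h' = h].

(* Abelian category (Freyd's definition, for a preadditive category):
   zero object, binary products, kernels, cokernels, every mono is a kernel
   and every epi is a cokernel. *)
Definition is_abelian : Prop :=
  (exists z : C, is_zero_obj z) /\
  (forall a b : C, exists P (p1 : hom C P a) (p2 : hom C P b), is_product p1 p2) /\
  (forall (a b : C) (f : hom C a b), exists K (i : hom C K a), is_kernel f i) /\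
  (forall (a b : C) (f : hom C a b), exists Q (p : hom C b Q), is_cokernel f p) /\
  (forall (a b : C) (m : hom C a b), mono m ->
        exists c (f : hom C b c), is_kernel f m) /\
  (forall (a b : C) (e : hom C a b), epi e ->
        exists c (f : hom C c a), is_cokernel f e).

Definition linear_category : Prop := is_abelian.

Definition findim_homs : Prop :=
  forall a b : C, exists n (v : 'I_n -> hom C a b),
    forall f : hom C a b, exists c : 'I_n -> k, f = \sum_(i < n) c i *: v i.

Definition sub_le (a x y : C) (m1 : hom C x a) (m2 : hom C y a) : Prop :=
  exists h : hom C x y, comp m2 h = m1.

Definition finite_length (a : C) : Prop :=
  ~ exists (S : nat -> C) (m : forall n, hom C (S n) a),
      (forall n, mono (m n)) /\
      (forall n, sub_le (m n.+1) (m n) /\ ~ sub_le (m n) (m n.+1)).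

Definition projective (P : C) : Prop :=
  forall (a b : C) (e : hom C a b), epi e ->
    forall g : hom C P b, exists h : hom C P a, comp e h = g.

Definition enough_projectives : Prop :=
  forall a : C, exists P (e : hom C P a), projective P /\ epi e.

Definition simple (S : C) : Prop :=
  ~ is_zero_obj S /\
  forall x (m : hom C x S), mono m -> is_zero_obj x \/ iso m.

Definition finitely_many_simples : Prop :=
  exists n (S : 'I_n -> C), forall X : C, simple X -> exists i, isomorphic X (S i).

Definition finite_linear_category : Prop :=
  [/\ linear_category, findim_homs, forall a : C, finite_length a,
      enough_projectives & finitely_many_simples].
End CatDefs.

Record LinFunctor (k : fieldType) (C D : LinCat k) := {
  fob :> C -> D;
  fhom : forall a b : C, hom C a b -> hom D (fob a) (fob b);
  fhom_id : forall a : C, fhom (idm a) = idm (fob a);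
  fhom_comp : forall (a b c : C) (g : hom C b c) (f : hom C a b),
      fhom (comp g f) = comp (fhom g) (fhom f);
  fhom_linear : forall (a b : C) (x : k) (f g : hom C a b),
      fhom (x *: f + g) = x *: fhom f + fhom g
}.
Arguments fhom {k C D} F {a b} f : rename.

Section FunctorDefs.
Variables (k : fieldType) (C D : LinCat k).

Definition faithful (U : LinFunctor D C) : Prop :=
  forall (a b : D) (f g : hom D a b), fhom U f = fhom U g -> f = g.

Definition exact_functor (U : LinFunctor D C) : Prop :=
  (forall (a b K : D) (f : hom D a b) (i : hom D K a),
      is_kernel f i -> is_kernel (fhom U f) (fhom U i)) /\
  (forall (a b Q : D) (f : hom D a b) (p : hom D b Q),
      is_cokernel f p -> is_cokernel (fhom U f) (fhom U p)).

Definition adjunction (F : LinFunctor C D) (U : LinFunctor D C) : Prop :=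
  exists (eta : forall c : C, hom C c (U (F c)))
         (eps : forall d : D, hom D (F (U d)) d),
  [/\ forall (c c' : C) (f : hom C c c'),
        comp (eta c') f = comp (fhom U (fhom F f)) (eta c),
      forall (d d' : D) (g : hom D d d'),
        comp g (eps d) = comp (eps d') (fhom F (fhom U g)),
      forall c : C, comp (eps (F c)) (fhom F (eta c)) = idm (F c)
    & forall d : D, comp (fhom U (eps d)) (eta (U d)) = idm (U d)].
End FunctorDefs.

(* Main.v *)
Require Import Defs.
From mathcomp Require Import all_boot all_algebra.
From Stdlib Require Import Classical ClassicalEpsilon.
Set Implicit Arguments. Unset Strict Implicit. Unset Printing Implicit Defensive.
Import GRing.Theory.
Local Notation hom := Defs.hom.
Local Notation comp := Defs.comp.
Local Notation mono := Defs.mono.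
Local Notation epi := Defs.epi.
Local Open Scope ring_scope.

Section Basic.
Variables (k : fieldType) (C : LinCat k).
Implicit Types a b c x y : C.

Lemma comp0r a b c (g : hom C b c) : comp g (0 : hom C a b) = 0.
Proof.
have := @comp_linear_r _ _ a _ _ g 1 0 0; rewrite scaler0 addr0 scale1r => H.
by apply: (addrI (comp g (0 : hom C a b))); rewrite addr0 -H.
Qed.
Lemma comp0l a b c (f : hom C a b) : comp (0 : hom C b c) f = 0.
Proof.
have := @comp_linear_l _ _ _ _ c f 1 0 0; rewrite scaler0 addr0 scale1r => H.
by apply: (addrI (comp (0 : hom C b c) f)); rewrite addr0 -H.
Qed.
Lemma compBr a b c (g : hom C b c) (f1 f2 : hom C a b) :
  comp g (f1 - f2) = comp g f1 - comp g f2.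
Proof.
by have := comp_linear_r g (-1) f2 f1; rewrite !scaleN1r addrC [_ + comp _ _]addrC.
Qed.
Lemma compBl a b c (f : hom C a b) (g1 g2 : hom C b c) :
  comp (g1 - g2) f = comp g1 f - comp g2 f.
Proof.
by have := comp_linear_l f (-1) g2 g1; rewrite !scaleN1r addrC [_ + comp _ _]addrC.
Qed.

Lemma zero_to z a (Hz : is_zero_obj z) (f : hom C a z) : f = 0.
Proof. by rewrite -[f]comp_id_l Hz comp0l. Qed.
Lemma zero_from z a (Hz : is_zero_obj z) (f : hom C z a) : f = 0.
Proof. by rewrite -[f]comp_id_r Hz comp0r. Qed.

Lemma ker_mono a b K (f : hom C a b) (i : hom C K a) : is_kernel f i -> mono i.
Proof.
move=> [fi0 U] x g h E.
have [u [_ Hu]] := U x (comp i g) ltac:(by rewrite comp_assoc fi0 comp0l).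
by rewrite (Hu g erefl) (Hu h (esym E)).
Qed.
Lemma coker_epi a b Q (f : hom C a b) (p : hom C b Q) : is_cokernel f p -> epi p.
Proof.
move=> [pf0 U] x g h E.
have [u [_ Hu]] := U x (comp g p) ltac:(by rewrite -comp_assoc pf0 comp0r).
by rewrite (Hu g erefl) (Hu h (esym E)).
Qed.

Lemma mono_eq0 a b (m : hom C a b) : mono m ->
  forall x (g : hom C x a), comp m g = 0 -> g = 0.
Proof. by move=> Hm x g H; apply: Hm; rewrite H comp0r. Qed.
Lemma epi_eq0 a b (e : hom C a b) : epi e ->
  forall x (g : hom C b x), comp g e = 0 -> g = 0.
Proof. by move=> He x g H; apply: He; rewrite H comp0l. Qed.



Lemma mono_ker_zero a b K (m : hom C a b) (i : hom C K a) :
  mono m -> is_kernel m i -> is_zero_obj K.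
Proof.
move=> Hm Hk; have Hi := ker_mono Hk; case: Hk => mi0 _.
have i0 : i = 0 by apply: (mono_eq0 Hm).
by apply: (mono_eq0 Hi); rewrite comp_id_r.
Qed.
Lemma epi_coker_zero a b Q (e : hom C a b) (p : hom C b Q) :
  epi e -> is_cokernel e p -> is_zero_obj Q.
Proof.
move=> He Hk; have Hp := coker_epi Hk; case: Hk => pe0 _.
have p0 : p = 0 by apply: (epi_eq0 He).
by apply: (epi_eq0 Hp); rewrite comp_id_l.
Qed.
Lemma ker_zero_mono a b K (m : hom C a b) (i : hom C K a) :
  is_zero_obj K -> is_kernel m i -> mono m.
Proof.
move=> Hz [_ U] x g h E.
have [u [Hu _]] := U x (g - h) ltac:(by rewrite compBr E subrr).
apply/eqP; rewrite -subr_eq0 -Hu; apply/eqP.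
by rewrite (zero_to Hz u) comp0r.
Qed.
Lemma coker_zero_epi a b Q (e : hom C a b) (p : hom C b Q) :
  is_zero_obj Q -> is_cokernel e p -> epi e.
Proof.
move=> Hz [_ U] x g h E.
have [u [Hu _]] := U x (g - h) ltac:(by rewrite compBl E subrr).
apply/eqP; rewrite -subr_eq0 -Hu; apply/eqP.
by rewrite (zero_from Hz u) comp0l.
Qed.

Lemma mono_comp a b c (g : hom C b c) (f : hom C a b) : mono g -> mono f -> mono (comp g f).
Proof. by move=> Hg Hf x u v; rewrite -!comp_assoc => /Hg /Hf. Qed.
Lemma epi_comp a b c (g : hom C b c) (f : hom C a b) : epi g -> epi f -> epi (comp g f).
Proof. by move=> Hg Hf x u v; rewrite !comp_assoc => /Hf /Hg. Qed.
Lemma mono_id a : mono (idm a).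
Proof. by move=> x u v; rewrite !comp_id_l. Qed.

Lemma iso_sym a b : isomorphic a b -> isomorphic b a.
Proof. by case=> f [g [H1 H2]]; exists g; exists f. Qed.

End Basic.
Section Abel.
Variables (k : fieldType) (C : LinCat k).
Hypothesis HA : is_abelian C.

Lemma ker_ex a b (f : hom C a b) : exists K (i : hom C K a), is_kernel f i.
Proof. by case: HA => [_ [_ [H _]]]; apply: H. Qed.
Lemma coker_ex a b (f : hom C a b) : exists Q (p : hom C b Q), is_cokernel f p.
Proof. by case: HA => [_ [_ [_ [H _]]]]; apply: H. Qed.
Lemma mono_is_ker a b (m : hom C a b) : mono m -> exists c (f : hom C b c), is_kernel f m.
Proof. by case: HA => [_ [_ [_ [_ [H _]]]]]; apply: H. Qed.
Lemma epi_is_coker a b (e : hom C a b) : epi e -> exists c (f : hom C c a), is_cokernel f e.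
Proof. by case: HA => [_ [_ [_ [_ [_ H]]]]]; apply: H. Qed.

Lemma iso_inv_eq a b (f : hom C a b) (g : hom C b a) : comp f g = idm b ->
  forall x (h : hom C b x), comp (comp h f) g = h.
Proof. by move=> H x h; rewrite -comp_assoc H comp_id_r. Qed.

Lemma mono_epi_iso a b (m : hom C a b) : mono m -> epi m -> iso m.
Proof.
move=> Hm He; have [c [f [fm0 U]]] := mono_is_ker Hm.
have f0 : f = 0 by apply: (epi_eq0 He).
have [h [mh _]] := U b (idm b) ltac:(by rewrite f0 comp0l).
exists h; split=> //; apply: Hm; by rewrite comp_assoc mh comp_id_l comp_id_r.
Qed.

Lemma nonzero_simple_epi a T (f : hom C a T) : simple T -> f <> 0 -> epi f.
Proof.
move=> [_ ST] f0.
have [Q [c Hc]] := coker_ex f.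
have [K [i Hi]] := ker_ex c.
have [ci0 Ui] := Hi.
have [cf0 Uc] := Hc.
have [h [ih _]] := Ui a f cf0.
case: (ST K i (ker_mono Hi)) => [Kz | [j [ji ij]]].
  by case: f0; rewrite -ih (zero_to Kz h) comp0r.
have c0 : c = 0 by rewrite -[c]comp_id_r -ij comp_assoc ci0 comp0l.
apply: (coker_zero_epi _ Hc).
by apply: (epi_eq0 (coker_epi Hc)); rewrite comp_id_l.
Qed.

Lemma schur S T (g : hom C S T) : simple S -> simple T -> g <> 0 -> iso g.
Proof.
move=> HS HT g0; apply: mono_epi_iso; last exact: nonzero_simple_epi.
have [K [i Hi]] := ker_ex g.
case: HS => _ ST; case: (ST K i (ker_mono Hi)) => [Kz | [j [ji ij]]].
  exact: ker_zero_mono Kz Hi.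
case: g0; case: Hi => gi0 _.
by rewrite -[g]comp_id_r -ij comp_assoc gi0 comp0l.
Qed.

Lemma epi_factor a S L (phi : hom C a S) (i : hom C L a) : epi phi -> is_kernel phi i ->
  forall x (psi : hom C a x), comp psi i = 0 -> exists g : hom C S x, comp g phi = psi.
Proof.
move=> He [phii0 Ui] x psi psii0.
have [c [f [phif0 Uf]]] := epi_is_coker He.
have [h [ih _]] := Ui c f phif0.
have [g [gp _]] := Uf x psi ltac:(by rewrite -ih comp_assoc psii0 comp0l).
by exists g.
Qed.

End Abel.

Section Func.
Variables (k : fieldType) (C D : LinCat k) (F : LinFunctor C D).
Lemma fhom0 (a b : C) : fhom F (0 : hom C a b) = 0.
Proof.
have := fhom_linear F 1 (0 : hom C a b) 0; rewrite scaler0 addr0 scale1r => H.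
by apply: (addrI (fhom F (0 : hom C a b))); rewrite addr0 -H.
Qed.
Lemma fhomB (a b : C) (f g : hom C a b) : fhom F (f - g) = fhom F f - fhom F g.
Proof. by have := fhom_linear F (-1) g f; rewrite !scaleN1r addrC [_ + fhom _ _]addrC. Qed.
Lemma fzero (z : C) : is_zero_obj z -> is_zero_obj (F z).
Proof. by rewrite /is_zero_obj -fhom_id => ->; rewrite fhom0. Qed.
End Func.
Section Main.
Variables (k : fieldType) (C D : LinCat k) (F : LinFunctor C D) (U : LinFunctor D C).
Hypotheses (HC : is_abelian C) (HD : is_abelian D).
Variables (eta : forall c : C, hom C c (U (F c))) (eps : forall d : D, hom D (F (U d)) d).
Hypotheses (nat_eta : forall (c c' : C) (f : hom C c c'),
        comp (eta c') f = comp (fhom U (fhom F f)) (eta c))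
  (nat_eps : forall (d d' : D) (g : hom D d d'),
        comp g (eps d) = comp (eps d') (fhom F (fhom U g)))
  (tri1 : forall c : C, comp (eps (F c)) (fhom F (eta c)) = idm (F c))
  (tri2 : forall d : D, comp (fhom U (eps d)) (eta (U d)) = idm (U d)).
Hypotheses (Hex : exact_functor U) (Hfa : faithful U).

Lemma U_mono (a b : D) (m : hom D a b) : mono m -> mono (fhom U m).
Proof.
move=> Hm; have [K [i Hi]] := ker_ex HD m.
apply: (ker_zero_mono (i := fhom U i)); last by case: Hex => H _; apply: H.
exact/fzero/(mono_ker_zero Hm Hi).
Qed.
Lemma U_epi (a b : D) (m : hom D a b) : epi m -> epi (fhom U m).
Proof.
move=> Hm; have [K [i Hi]] := coker_ex HD m.
apply: (coker_zero_epi (p := fhom U i)); last by case: Hex => _ H; apply: H.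
exact/fzero/(epi_coker_zero Hm Hi).
Qed.
Lemma U_nz (d : D) : ~ is_zero_obj d -> ~ is_zero_obj (U d).
Proof.
move=> Hd Hz; apply: Hd; apply: Hfa; rewrite fhom0 fhom_id; exact: Hz.
Qed.
Lemma U_nzhom (a b : D) (f : hom D a b) : f <> 0 -> fhom U f <> 0.
Proof. by move=> H E; apply: H; apply: Hfa; rewrite E fhom0. Qed.

Lemma reflect_sub_le (a x y : D) (m1 : hom D x a) (m2 : hom D y a) :
  mono m2 -> sub_le (fhom U m1) (fhom U m2) -> sub_le m1 m2.
Proof.
move=> Hm [h Hh]; have [c [f [fm0 Uf]]] := mono_is_ker HD Hm.
suff /Uf [u [mu _]] : comp f m1 = 0 by exists u.
apply: Hfa; rewrite fhom0 fhom_comp -Hh comp_assoc -fhom_comp fm0 fhom0 comp0l //=.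
Qed.

Lemma finlen_D (a : D) : finite_length (U a) -> finite_length a.
Proof.
move=> HL [S [m [Hm Hs]]]; apply: HL.
exists (fun n => U (S n)), (fun n => fhom U (m n)); split.
  by move=> n; apply: U_mono.
move=> n; have [[h Hh] Hn] := Hs n; split.
  by exists (fhom U h); rewrite -fhom_comp Hh.
by move/(reflect_sub_le (Hm n.+1)).
Qed.

Definition bar (c : C) (d : D) (g : hom D (F c) d) : hom C c (U d) := comp (fhom U g) (eta c).
Definition hat (c : C) (d : D) (f : hom C c (U d)) : hom D (F c) d := comp (eps d) (fhom F f).
Lemma hat_bar c d (g : hom D (F c) d) : hat (bar g) = g.
Proof.
by rewrite /hat /bar fhom_comp comp_assoc -nat_eps -comp_assoc tri1 comp_id_r.
Qed.
Lemma bar_hat c d (f : hom C c (U d)) : bar (hat f) = f.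
Proof.
by rewrite /hat /bar fhom_comp -comp_assoc -nat_eta comp_assoc tri2 comp_id_l.
Qed.
Lemma bar_comp c d d' (g : hom D (F c) d) (h : hom D d d') : bar (comp h g) = comp (fhom U h) (bar g).
Proof. by rewrite /bar fhom_comp comp_assoc. Qed.
Lemma bar_compF c c' d (e : hom C c c') (g : hom D (F c') d) :
  bar (comp g (fhom F e)) = comp (bar g) e.
Proof. by rewrite /bar fhom_comp -!comp_assoc nat_eta. Qed.

Lemma eps_epi d : epi (eps d).
Proof.
move=> x g h E; apply: Hfa.
rewrite -[fhom U g]comp_id_r -[fhom U h]comp_id_r -(tri2 d) !comp_assoc -!fhom_comp E //.
Qed.
Lemma F_epi c c' (e : hom C c c') : epi e -> epi (fhom F e).
Proof.
move=> He x g h E; rewrite -(hat_bar g) -(hat_bar h); congr hat.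
by apply: He; rewrite -!bar_compF E.
Qed.
Lemma F_proj P : projective P -> projective (F P).
Proof.
move=> HP a b e He g.
have [h Hh] := HP _ _ _ (U_epi He) (bar g).
exists (hat h); rewrite /hat comp_assoc nat_eps -comp_assoc -fhom_comp Hh.
exact: hat_bar.
Qed.

Lemma enough_proj_D : enough_projectives C -> enough_projectives D.
Proof.
move=> HP d; have [P [e [Pp Pe]]] := HP (U d).
exists (F P), (hat e); split; first exact: F_proj.
by apply: epi_comp; [apply: eps_epi | apply: F_epi].
Qed.

End Main.
Section SimpleSub.
Variables (k : fieldType) (C : LinCat k).

Lemma not_simple_sub (x : C) : ~ is_zero_obj x -> ~ simple x ->
  exists x' (m' : hom C x' x), [/\ mono m', ~ is_zero_obj x' & ~ iso m'].
Proof.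
move=> Hx Hs; apply: NNPP => Hn; apply: Hs; split=> // x' m' Hm'.
case: (classic (is_zero_obj x')) => [|Hz]; first by left.
right; apply: NNPP => Hi; apply: Hn; by exists x', m'.
Qed.

Lemma simple_sub (Y : C) : finite_length Y -> ~ is_zero_obj Y ->
  exists X (j : hom C X Y), mono j /\ simple X.
Proof.
move=> HL HY; apply: NNPP => H.
pose T := {x : C & {m : hom C x Y | mono m /\ ~ is_zero_obj x}}.
have step : forall t : T, exists t' : T,
   sub_le (proj1_sig (projT2 t')) (proj1_sig (projT2 t)) /\
   ~ sub_le (proj1_sig (projT2 t)) (proj1_sig (projT2 t')).
  case=> x [m Hmx] /=; case: (Hmx) => Hm Hx.
  have Hs : ~ simple x by move=> Hs; apply: H; exists x, m.
  have [x' [m' [Hm' Hx' Hi]]] := not_simple_sub Hx Hs.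
  exists (existT _ x' (exist _ (comp m m') (conj (mono_comp Hm Hm') Hx'))) => /=.
  split; first by exists m'.
  case=> h Hh; apply: Hi; exists h.
  have mh : comp m' h = idm x by apply: Hm; rewrite comp_assoc Hh comp_id_r.
  split=> //; apply: Hm'; by rewrite comp_assoc mh comp_id_l comp_id_r.
pose st (t : T) : T := proj1_sig (constructive_indefinite_description _ (step t)).
have stP t := proj2_sig (constructive_indefinite_description _ (step t)).
pose t0 : T := existT _ Y (exist _ (idm Y) (conj (@mono_id _ _ Y) HY)).
pose sq n := iter n st t0.
apply: HL; exists (fun n => projT1 (sq n)), (fun n => proj1_sig (projT2 (sq n))).
split; first by move=> n; case: (sq n) => x [m Hmx]; case: Hmx.
by move=> n; apply: (stP (sq n)).
Qed.
End SimpleSub.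
Section Chain.
Variables (k : fieldType) (C : LinCat k).
Hypothesis HA : is_abelian C.
Variables (G : C) (HG : projective G).

Lemma pairwise S T (phi : hom C G S) (psi : hom C G T) :
  simple S -> simple T -> phi <> 0 -> psi <> 0 -> ~ isomorphic S T ->
  exists x : hom C G G, comp phi x = 0 /\ comp psi x = psi.
Proof.
move=> HS HT phi0 psi0 HST.
have [L [i Hi]] := ker_ex HA phi.
case: (classic (comp psi i = 0)) => H.
  have [g Hg] := epi_factor HA (nonzero_simple_epi HA HS phi0) Hi H.
  case: HST; exists g; apply: schur => // g0; apply: psi0.
  by rewrite -Hg g0 comp0l.
have [h Hh] := HG (nonzero_simple_epi HA HT H) psi.
exists (comp i h); split; first by case: Hi => phii0 _; rewrite comp_assoc phii0 comp0l.
by rewrite comp_assoc.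
Qed.

Variables (S : nat -> C) (q : forall n, hom C G (S n)).
Hypotheses (HS : forall n, simple (S n)) (Hq : forall n, q n <> 0).

Lemma sep t n : (forall j, (j < n)%N -> ~ isomorphic (S j) (S t)) ->
  exists e : hom C G G, (forall j, (j < n)%N -> comp (q j) e = 0) /\ comp (q t) e <> 0.
Proof.
elim: n => [|n IH] Hn.
  by exists (idm G); split=> // ; rewrite comp_id_r.
have [e [He1 He2]] := IH (fun j hj => Hn j (ltnW hj)).
case: (classic (comp (q n) e = 0)) => H0.
  exists e; split=> // j; rewrite ltnS leq_eqVlt => /orP [/eqP -> //|]; exact: He1.
have [x [Hx1 Hx2]] := pairwise (HS n) (HS t) H0 He2 (Hn n (ltnSn n)).
exists (comp e x); split; last by rewrite comp_assoc Hx2.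
move=> j; rewrite ltnS leq_eqVlt => /orP [/eqP -> //|hj]; first by rewrite comp_assoc.
by rewrite comp_assoc He1 // comp0l.
Qed.

Lemma kerch a b (f : hom C a b) : {K : C & {i : hom C K a | is_kernel f i}}.
Proof.
have [K HK] := constructive_indefinite_description _ (ker_ex HA f).
exists K; exact: constructive_indefinite_description _ HK.
Qed.

Fixpoint chain (n : nat) : {K : C & hom C K G} :=
  match n with
  | 0 => existT _ G (idm G)
  | n'.+1 => let t := chain n' in
      let kk := kerch (comp (q n') (projT2 t)) in
      existT _ (projT1 kk) (comp (projT2 t) (proj1_sig (projT2 kk)))
  end.

Lemma chain_char n x (y : hom C x G) :
  (exists h, comp (projT2 (chain n)) h = y) <-> (forall j, (j < n)%N -> comp (q j) y = 0).
Proof.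
elim: n x y => [|n IH] x y /=.
  by split=> // _; exists y; rewrite comp_id_l.
case: (kerch (comp (q n) (projT2 (chain n)))) => K [i [Hi0 Ui]] /=; split.
  move=> [h <-] j; rewrite ltnS leq_eqVlt => /orP [/eqP ->|hj].
    by rewrite !comp_assoc Hi0 comp0l.
  rewrite -comp_assoc; exact: (IH x _).1 (ex_intro _ (comp i h) erefl) j hj.
move=> Hj; have [h Hh] := (IH _ y).2 (fun j hj => Hj j (ltnW hj)).
have [u [Hu _]] := Ui x h ltac:(by rewrite -comp_assoc Hh; apply: Hj).
by exists u; rewrite -comp_assoc Hu.
Qed.

Lemma chain_mono n : mono (projT2 (chain n)).
Proof.
elim: n => [|n IH] /=; first exact: mono_id.
case: (kerch (comp (q n) (projT2 (chain n)))) => K [i Hi] /=; exact: mono_comp IH (ker_mono Hi).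
Qed.

Hypothesis Hni : forall i j, (j < i)%N -> ~ isomorphic (S i) (S j).

Lemma chain_contra : finite_length G -> False.
Proof.
move=> HL; apply: HL.
exists (fun n => projT1 (chain n)), (fun n => projT2 (chain n)); split.
  exact: chain_mono.
move=> n; split.
  apply: (chain_char n _).2 => j hj.
  exact: (chain_char n.+1 _).1 (ex_intro _ (idm _) (comp_id_r _)) j (ltnW hj).
move=> Hs.
have Hqn : comp (q n) (projT2 (chain n)) = 0.
  case: Hs => h Hh; exact: (chain_char n.+1 _).1 (ex_intro _ h Hh) n (ltnSn n).
have [e [He1 He2]] := @sep n n (fun j hj Hiso => Hni hj (iso_sym Hiso)).
have [h Hh] := (chain_char n e).2 He1.
by apply: He2; rewrite -Hh comp_assoc Hqn comp0l.
Qed.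
End Chain.
Section FinQuot.
Variables (k : fieldType) (C : LinCat k).
Hypothesis HA : is_abelian C.
Variables (G : C) (HG : projective G) (HL : finite_length G).

Lemma fin_quot : exists n (R : nat -> C), forall T (q : hom C G T), simple T -> q <> 0 ->
  exists j, (j < n)%N /\ isomorphic T (R j).
Proof.
apply: NNPP => H.
have pickP : forall n (R : nat -> C), exists T, exists q : hom C G T,
    simple T /\ q <> 0 /\ forall j, (j < n)%N -> ~ isomorphic T (R j).
  move=> n R; apply: NNPP => H2; apply: H; exists n, R => T q HT Hq.
  apply: NNPP => H3; apply: H2; exists T, q; do 2!split=> //.
  by move=> j hj Hi; apply: H3; exists j.
have pick : forall n (R : nat -> C), {T : C & {q : hom C G T |
    simple T /\ q <> 0 /\ forall j, (j < n)%N -> ~ isomorphic T (R j)}}.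
  move=> n R; have [T HT] := constructive_indefinite_description _ (pickP n R).
  exists T; exact: constructive_indefinite_description _ HT.
pose f (p : nat * (nat -> C)) : nat * (nat -> C) :=
  (p.1.+1, fun i => if i == p.1 then projT1 (pick p.1 p.2) else p.2 i).
pose sq n := iter n f (0%N, fun _ => G).
have sq1 n : (sq n).1 = n by elim: n => //= n ->.
pose S i := projT1 (pick i (sq i).2).
have sq2 n j : (j < n)%N -> (sq n).2 j = S j.
  elim: n => // n IH; rewrite ltnS leq_eqVlt => /orP [/eqP ->|hj] /=.
    by rewrite sq1 eqxx.
  by rewrite sq1 (ltn_eqF hj) IH.
pose q i : hom C G (S i) := proj1_sig (projT2 (pick i (sq i).2)).
apply: (@chain_contra k C HA G HG S q _ _ _ HL).
- by move=> i; case: (proj2_sig (projT2 (pick i (sq i).2))).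
- by move=> i; case: (proj2_sig (projT2 (pick i (sq i).2))) => _ [].
- move=> i j hj; rewrite -(sq2 i j hj).
  by case: (proj2_sig (projT2 (pick i (sq i).2))) => _ [_]; apply.
Qed.
End FinQuot.
Section LinAlg.
Variables (k : fieldType).

Fixpoint inspan (W : lmodType k) (s : seq W) (x : W) : Prop :=
  match s with [::] => x = 0 | w :: s' => exists a, inspan s' (x - a *: w) end.

Lemma inspan0 (W : lmodType k) (s : seq W) : inspan s 0.
Proof. by elim: s => //= w s IH; exists 0; rewrite scale0r subr0. Qed.

Lemma inspan_lin (W : lmodType k) (s : seq W) c x y :
  inspan s x -> inspan s y -> inspan s (c *: x + y).
Proof.
elim: s x y => [|w s IH] x y /=; first by move=> -> ->; rewrite scaler0 addr0.
move=> [a Ha] [b Hb]; exists (c * a + b).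
have -> : c *: x + y - (c * a + b) *: w = c *: (x - a *: w) + (y - b *: w).
  by rewrite scalerDl scalerBr scalerA opprD !addrA; congr (_ + _);
     rewrite -!addrA; congr (_ + _); rewrite addrC.
exact: IH.
Qed.

Lemma inspan_mem (W : lmodType k) (s : seq W) w : w \in s -> inspan s w.
Proof.
elim: s => //= u s IH; rewrite inE => /orP [/eqP ->|Hw].
  by exists 1; rewrite scale1r subrr; apply: inspan0.
by exists 0; rewrite scale0r subr0; apply: IH.
Qed.

Lemma inspan_of_ord (W : lmodType k) n (v : 'I_n -> W) (c : 'I_n -> k) :
  inspan (map v (enum 'I_n)) (\sum_(i < n) c i *: v i).
Proof.
apply: (big_ind (inspan (map v (enum 'I_n)))); first exact: inspan0.
  by move=> x y Hx Hy; rewrite -[x]scale1r; apply: inspan_lin.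
move=> i _; rewrite -[_ *: _]addr0; apply: inspan_lin; last exact: inspan0.
by apply: inspan_mem; apply: map_f; rewrite mem_enum.
Qed.

Lemma ord_of_inspan (W : lmodType k) (s : seq W) x : inspan s x ->
  exists c : 'I_(size s) -> k, x = \sum_(i < size s) c i *: s`_i.
Proof.
elim: s x => [|w s IH] x /=; first by move=> ->; exists (fun _ => 0); rewrite big_ord0.
move=> [a /IH [c Hc]].
exists (fun i => if unlift ord0 i is Some j then c j else a).
rewrite big_ord_recl /= unlift_none.
under eq_bigr => i _ do rewrite liftK.
by rewrite -Hc addrC subrK.
Qed.

Lemma inspan_map (V W : lmodType k) (phi : V -> W)
  (lin : forall c x y, phi (c *: x + y) = c *: phi x + phi y)
  (inj : forall x y, phi x = phi y -> x = y) (l : seq V) x :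
  inspan (map phi l) (phi x) -> inspan l x.
Proof.
have phi0 : phi 0 = 0.
  have := lin 1 0 0; rewrite scaler0 addr0 scale1r => H.
  by apply: (addrI (phi 0)); rewrite addr0 -H.
have phiB y z : phi (y - z) = phi y - phi z.
  by have := lin (-1) z y; rewrite !scaleN1r addrC [_ + phi y]addrC.
elim: l x => [|u l IH] x /=; first by rewrite -phi0 => /inj.
move=> [a Ha]; exists a; apply: IH.
suff -> : phi (x - a *: u) = phi x - a *: phi u by [].
by rewrite phiB; congr (_ - _); have := lin a u 0; rewrite !addr0 phi0 addr0.
Qed.

Lemma subspace_span (W : lmodType k) (P : W -> Prop)
  (P0 : P 0) (Plin : forall c x y, P x -> P y -> P (c *: x + y)) (s : seq W) :
  (forall x, P x -> inspan s x) ->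
  exists t : seq W, (forall y, y \in t -> P y) /\ forall x, P x -> inspan t x.
Proof.
elim: s P P0 Plin => [|w s IH] P P0 Plin /= Hs.
  exists [::]; split=> // x /Hs //.
case: (classic (exists v0, P v0 /\ exists a, a != 0 /\ inspan s (v0 - a *: w))) => [|Hno].
  move=> [v0 [Pv0 [a0 [a0n Hv0]]]].
  pose P' x := P x /\ inspan s x.
  have [|||t [Ht1 Ht2]] := IH P'.
  - by split => //; apply: inspan0.
  - by move=> c x y [Px Sx] [Py Sy]; split; [apply: Plin|apply: inspan_lin].
  - by move=> x [].
  exists (v0 :: t); split.
    by move=> y; rewrite inE => /orP [/eqP ->|/Ht1 []].
  move=> x Px /=; have [b Hb] := Hs x Px.
  exists (b / a0); apply: Ht2; split.
    by rewrite addrC -scaleNr; apply: Plin.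
  have -> : x - b / a0 *: v0 = (- (b / a0)) *: (v0 - a0 *: w) + (x - b *: w).
    rewrite scalerBr scalerA mulNr divfK // !scaleNr opprK.
    by rewrite addrC -addrA [_ *: w + _]addrC subrK.
  exact: inspan_lin.
have Hs' : forall x, P x -> inspan s x.
  move=> x Px; have [a Ha] := Hs x Px.
  case: (eqVneq a 0) => [a0|an]; first by move: Ha; rewrite a0 scale0r subr0.
  by case: Hno; exists x; split=> //; exists a.
exact: IH.
Qed.
End LinAlg.
Section Final.
Variables (k : fieldType) (C D : LinCat k) (F : LinFunctor C D) (U : LinFunctor D C).
Hypotheses (HC : is_abelian C) (HD : is_abelian D).
Variables (eta : forall c : C, hom C c (U (F c))) (eps : forall d : D, hom D (F (U d)) d).
Hypotheses (nat_eta : forall (c c' : C) (f : hom C c c'),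
        comp (eta c') f = comp (fhom U (fhom F f)) (eta c))
  (nat_eps : forall (d d' : D) (g : hom D d d'),
        comp g (eps d) = comp (eps d') (fhom F (fhom U g)))
  (tri1 : forall c : C, comp (eps (F c)) (fhom F (eta c)) = idm (F c))
  (tri2 : forall d : D, comp (fhom U (eps d)) (eta (U d)) = idm (U d)).
Hypotheses (Hex : exact_functor U) (Hfa : faithful U).
Hypothesis HfinC : finite_linear_category C.

Lemma findim_D : findim_homs D.
Proof.
case: HfinC => _ HfdC _ _ _ a b.
have [n [v Hv]] := HfdC (U a) (U b).
pose P (x : hom C (U a) (U b)) := exists f : hom D a b, x = fhom U f.
have P0 : P 0 by exists 0; rewrite fhom0.
have Plin : forall c x y, P x -> P y -> P (c *: x + y).
  by move=> c x y [f ->] [g ->]; exists (c *: f + g); rewrite fhom_linear.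
have Hall : forall x, P x -> inspan (map v (enum 'I_n)) x.
  by move=> x _; have [c ->] := Hv x; apply: inspan_of_ord.
have [t [Ht1 Ht2]] := @subspace_span k _ P P0 Plin _ Hall.
have preP y : exists f : hom D a b, P y -> y = fhom U f.
  case: (classic (P y)) => [[f Hf]|Hn]; first by exists f.
  by exists 0.
pose pre y := proj1_sig (constructive_indefinite_description _ (preP y)).
have preK : map (fun f => fhom U f) (map pre t) = t.
  rewrite -map_comp; apply: map_id_in => y /Ht1 Py /=.
  by rewrite /pre; case: (constructive_indefinite_description _ _) => f /= ->.
have Hsp : forall g : hom D a b, inspan (map pre t) g.
  move=> g; apply: (@inspan_map k _ _ (fun f => fhom U f)).
  - by move=> c x y; rewrite fhom_linear.
  - exact: Hfa.
  by rewrite preK; apply: Ht2; exists g.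
exists (size (map pre t)), (fun i => (map pre t)`_i) => g.
exact: ord_of_inspan.
Qed.

Lemma finlen_all (a : D) : finite_length a.
Proof.
case: HfinC => _ _ HflC _ _.
by apply: (finlen_D HD Hex Hfa); apply: HflC.
Qed.

Lemma simples_D : finitely_many_simples D.
Proof.
case: HfinC => _ _ HflC HepC [m [X HX]].
have [z _] : exists z : D, is_zero_obj z by case: HD.
pose cond (T : D) (i : 'I_m) := exists Y (j : hom C Y (U T)),
   [/\ mono j, simple Y & isomorphic Y (X i)].
have Hi : forall i : 'I_m, exists n (R : nat -> D), forall T, simple T -> cond T i ->
    exists j, (j < n)%N /\ isomorphic T (R j).
  move=> i; have [P [e [Pp Pe]]] := HepC (X i).
  have [n [R HR]] := fin_quot HD (F_proj HD nat_eps tri1 Hex Pp) (finlen_all (a:=F P)).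
  exists n, R => T HT [Y [j [Hj HY [f [g' [gf fg]]]]]].
  pose phi := comp j (comp g' e).
  apply: (HR T (hat eps phi) HT) => H0.
  have phi0 : phi = 0.
    by rewrite -(bar_hat nat_eta tri2 phi) /bar H0 fhom0 comp0l.
  have ge0 : comp g' e = 0 by apply: (mono_eq0 Hj).
  have e0 : e = 0 by rewrite -[e]comp_id_l -fg -comp_assoc ge0 comp0r.
  have Xz : is_zero_obj (X i) by apply: (epi_eq0 Pe); rewrite comp_id_l.
  case: HY => HYn _; apply: HYn.
  by rewrite /is_zero_obj -gf (zero_to Xz f) comp0r.
have Hu : forall m', (m' <= m)%N -> exists n (R : nat -> D), forall T, simple T ->
    (exists i : 'I_m, (i < m')%N /\ cond T i) -> exists j, (j < n)%N /\ isomorphic T (R j).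
  elim=> [|m' IH] Hm'.
    by exists 0%N, (fun _ => z) => T _ [i []].
  have [n1 [R1 H1]] := IH (ltnW Hm').
  have [n2 [R2 H2]] := Hi (Ordinal Hm').
  exists (n1 + n2)%N, (fun j => if (j < n1)%N then R1 j else R2 (j - n1)%N).
  move=> T HT [i [hi Hc]].
  move: hi; rewrite ltnS leq_eqVlt => /orP [/eqP ei|hi].
    have ei' : i = Ordinal Hm' by apply: val_inj.
    have [j [hj Hj]] := H2 T HT ltac:(by rewrite -ei').
    exists (n1 + j)%N; split; first by rewrite ltn_add2l.
    by rewrite ltnNge leq_addr /= addKn.
  have [j [hj Hj]] := H1 T HT (ex_intro _ i (conj hi Hc)).
  exists j; split; first exact: (leq_trans hj (leq_addr _ _)).
  by rewrite hj.
have [n [R HR]] := Hu m (leqnn m).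
exists n, (fun i : 'I_n => R i) => T HT.
have [Y [j [Hj HY]]] := simple_sub (HflC (U T)) (U_nz Hfa (proj1 HT)).
have [i Hiso] := HX Y HY.
have [j' [hj' Hj']] := HR T HT (ex_intro _ i (conj (ltn_ord i) (ex_intro _ Y (ex_intro _ j (And3 Hj HY Hiso))))).
by exists (Ordinal hj').
Qed.

Lemma final : finite_linear_category D.
Proof.
split => //; [exact: findim_D | exact: finlen_all | | exact: simples_D].
by case: HfinC => _ _ _ HepC _; exact: (enough_proj_D HD nat_eta nat_eps tri1 tri2 Hex Hfa HepC).
Qed.
End Final.

Theorem lemma1p6 (k : fieldType) (C D : LinCat k)
    (F : LinFunctor C D) (U : LinFunctor D C) :
  linear_category C -> linear_category D ->
  adjunction F U -> exact_functor U -> faithful U ->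
  finite_linear_category C -> finite_linear_category D.
Proof.
move=> HC HD [eta [eps [n1 n2 t1 t2]]] Hex Hfa Hfin.
exact: (final HD n1 n2 t1 t2 Hex Hfa Hfin).
Qed.
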